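(* The map $M\mapsto\mathfrak W_M$ is a bijection from the set of submonoids of $(\mathbb N_0,+)$ onto the set of bracket pattern categories.
   Context: $\mathbb N=\{1,2,\dots\}$, $\mathbb N_0=\mathbb N\cup\{0\}$. A bracket pattern is a non-empty finite subset $w\subseteq\mathbb N$; $\|w\|:=\max(w)$. For bracket patterns $w,w'$: superposition $w\cup w'$; for $j\in w$ the projection $\cap_j w:=\{i\in w\mid i\le j\}$; the dual $w^\dagger:=\{\|w\|-i\mid i\in\mathbb N_0,\ i<\|w\|,\ i\notin w\}$. A bracket pattern category is a (possibly empty) set of bracket patterns closed under superposition, duals and projections. The completion of a bracket pattern $w$ is $A(w):=\{j-i\mid j\in w,\ i\in\mathbb N_0,\ i\notin w,\ i<j\}$. For a submonoid $M$ of $(\mathbb N_0,+)$ (a subset containing $0$ and closed under addition), $\mathfrak W_M:=\{w\mid w\text{ bracket pattern},\ A(w)\subseteq\mathbb N_0\setminus M\}$. *)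

(* Defs.v *)
From mathcomp Require Import all_boot.
From mathcomp Require Import finmap.
Set Implicit Arguments. Unset Strict Implicit. Unset Printing Implicit Defensive.
Local Open Scope fset_scope.

Definition bracket_pattern (w : {fset nat}) : Prop :=
  w != fset0 /\ (0%N \notin w).

Definition bnorm (w : {fset nat}) : nat := \max_(i <- w) i.

Definition superpos (w w' : {fset nat}) : {fset nat} := w `|` w'.

Definition proj (j : nat) (w : {fset nat}) : {fset nat} :=
  [fset i in w | (i <= j)%N].

Definition dual (w : {fset nat}) : {fset nat} :=
  [fset (bnorm w - i)%N | i in [seq i <- iota 0 (bnorm w) | i \notin w]].

Definition bp_category (C : {fset nat} -> Prop) : Prop :=
  (forall w, C w -> bracket_pattern w) /\
  (forall w w', C w -> C w' -> C (superpos w w')) /\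
  (forall w, C w -> C (dual w)) /\
  (forall w j, C w -> j \in w -> C (proj j w)).

Definition completion (w : {fset nat}) : nat -> Prop :=
  fun k => exists j i : nat, [/\ j \in w, i \notin w, (i < j)%N & k = (j - i)%N].

Definition submonoid (M : nat -> Prop) : Prop :=
  M 0%N /\ (forall a b, M a -> M b -> M (a + b)%N).

Definition W (M : nat -> Prop) : {fset nat} -> Prop :=
  fun w => bracket_pattern w /\ (forall k, completion w k -> ~ M k).

(* Main.v *)
Require Import Defs.
From mathcomp Require Import all_boot.
From mathcomp Require Import finmap.
From mathcomp Require Import zify.
From Stdlib Require Import Classical ClassicalEpsilon FunctionalExtensionality PropExtensionality.
Set Implicit Arguments. Unset Strict Implicit.
Local Open Scope fset_scope.

Lemma maxseq_mem (s : seq nat) : s != [::] -> \max_(i <- s) i \in s.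
Proof.
elim: s => [//|x s IH] _; rewrite big_cons inE.
case: s IH => [|y s] IH; first by rewrite big_nil maxn0 eqxx.
have := IH isT; set m := \max_(_ <- _) _ => Hm.
rewrite /maxn; case: (ltnP x m) => H.
  by rewrite Hm orbT.
by rewrite eqxx.
Qed.

Lemma bn_ge (w : {fset nat}) x : x \in w -> x <= bnorm w.
Proof. by move=> H; rewrite /bnorm; apply: (leq_bigmax_seq (F := id)). Qed.

Lemma bn_mem (w : {fset nat}) : bracket_pattern w -> bnorm w \in w.
Proof.
case=> H0 _; rewrite /bnorm; apply: maxseq_mem.
move: H0 => /fset0Pn [x Hx]; apply/eqP => E; move: Hx.
by rewrite -[x \in w]/(x \in (w : seq nat)) E.
Qed.

Lemma bn_eq (w : {fset nat}) n : n \in w -> (forall x, x \in w -> x <= n) -> bnorm w = n.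
Proof.
move=> Hn H; apply/eqP; rewrite eqn_leq bn_ge // andbT.
by apply/bigmax_leqP_seq => i Hi _; apply: H.
Qed.

Lemma bn_pos (w : {fset nat}) : bracket_pattern w -> 0 < bnorm w.
Proof.
move=> Hw; have := bn_mem Hw; case: Hw => _ H0.
by case: (bnorm w) => // H; rewrite H in H0.
Qed.

Lemma mem_dual (v : {fset nat}) x :
  (x \in dual v) = (0 < x <= bnorm v) && (bnorm v - x \notin v).
Proof.
rewrite /dual; apply/imfsetP/idP => [[i /= Hi ->]|/andP[/andP[H1 H2] H3]].
  move: Hi; rewrite mem_filter mem_iota add0n => /andP[Hv Hi].
  have -> : bnorm v - (bnorm v - i) = i by lia.
  rewrite Hv andbT; apply/andP; split; lia.
exists (bnorm v - x) => //=; last by lia.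
rewrite mem_filter mem_iota H3 /=; lia.
Qed.


Lemma mem_proj j (w : {fset nat}) x : (x \in proj j w) = (x \in w) && (x <= j).
Proof. by rewrite /proj !inE. Qed.

Lemma proj_bp j w : bracket_pattern w -> j \in w -> bracket_pattern (proj j w).
Proof.
case=> _ H0 Hj; split; last by rewrite mem_proj (negbTE H0).
by apply/fset0Pn; exists j; rewrite mem_proj Hj leqnn.
Qed.

Lemma proj_compl j w k : j \in w -> completion (proj j w) k -> completion w k.
Proof.
move=> Hj [a [i [Ha Hi Hia ->]]]; move: Ha Hi; rewrite !mem_proj => /andP[Ha Haj] Hi.
exists a, i; split => //; apply: contra Hi => Hi; rewrite Hi /=; lia.
Qed.

Lemma sup_bp w w' : bracket_pattern w -> bracket_pattern w' -> bracket_pattern (superpos w w').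
Proof.
case=> /fset0Pn [x Hx] H0 [_ H0']; split.
  by apply/fset0Pn; exists x; rewrite /superpos inE Hx.
by rewrite /superpos inE negb_or H0 H0'.
Qed.

Lemma sup_compl w w' k : completion (superpos w w') k -> completion w k \/ completion w' k.
Proof.
move=> [a [i [Ha Hi Hia ->]]]; move: Ha Hi; rewrite /superpos !inE negb_or => /orP[Ha|Ha] /andP[Hi Hi'].
  by left; exists a, i.
by right; exists a, i.
Qed.

Lemma dual_bp w : bracket_pattern w -> bracket_pattern (dual w).
Proof.
move=> Hw; have Hp := bn_pos Hw; case: (Hw) => _ H0; split.
  by apply/fset0Pn; exists (bnorm w); rewrite mem_dual subnn H0 leqnn Hp.
by rewrite mem_dual.
Qed.

Lemma bn_dual w : bracket_pattern w -> bnorm (dual w) = bnorm w.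
Proof.
move=> Hw; have Hp := bn_pos Hw; case: (Hw) => _ H0; apply: bn_eq.
  by rewrite mem_dual subnn H0 leqnn Hp.
by move=> x; rewrite mem_dual => /andP[/andP[]].
Qed.

Lemma dual_compl w k : bracket_pattern w -> completion (dual w) k -> completion w k.
Proof.
move=> Hw [a [b [Ha Hb Hab ->]]]; move: Ha Hb; rewrite !mem_dual.
move=> /andP[/andP[Ha1 Ha2] Ha3] Hb.
exists (bnorm w - b), (bnorm w - a); split => //; last by lia.
  case: (posnP b) => [->|Hb0]; first by rewrite subn0 bn_mem.
  move: Hb; rewrite Hb0 /= negb_and negbK; case/orP => // H; lia.
lia.
Qed.

Lemma part1 M : submonoid M -> bp_category (W M).
Proof.
move=> _; split; first by move=> w [].
split.
  move=> w w' [Hw Hc] [Hw' Hc']; split; first exact: sup_bp.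
  by move=> k /sup_compl [] H; [apply: Hc | apply: Hc'].
split.
  move=> w [Hw Hc]; split; first exact: dual_bp.
  by move=> k /(dual_compl Hw); apply: Hc.
move=> w j [Hw Hc] Hj; split; first exact: proj_bp.
by move=> k /(proj_compl Hj); apply: Hc.
Qed.


Definition pb (P : Prop) : bool := if excluded_middle_informative P then true else false.
Lemma pbP (P : Prop) : pb P <-> P.
Proof. by rewrite /pb; case: excluded_middle_informative. Qed.

Lemma inj_half (M M' : nat -> Prop) : submonoid M' -> W M = W M' -> forall k, M k -> M' k.
Proof.
move=> [H0 HD] E k Hk; apply: NNPP => Hk'.
have k0 : 0 < k by case: k Hk' {Hk} => //.
pose w := [fset j in iota 1 k | pb (M' (k - j))].
have memw j : j \in w <-> (0 < j <= k) /\ M' (k - j).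
  rewrite /w !inE mem_iota; split.
    by move=> /andP[H1 /pbP H2]; split => //; lia.
  by move=> [H1 H2]; apply/andP; split; [lia | apply/pbP].
have kw : k \in w by apply/memw; rewrite subnn; split => //; lia.
have Ww : W M' w.
  split.
    split; first by apply/fset0Pn; exists k.
    by apply/negP => /memw [] /andP[].
  move=> k' [j [i [Hj Hi Hij ->]]] Hm.
  move/memw: Hj => [Hj1 Hj2].
  have := HD _ _ Hj2 Hm; have -> : (k - j + (j - i) = k - i)%N by lia.
  case: (posnP i) => [->|Hi0]; first by rewrite subn0.
  by move=> H; move/negP: Hi; apply; apply memw; split => //; lia.
have w0 : 0 \notin w by case: Ww => [[]].
rewrite -E in Ww; case: Ww => _ /(_ k); apply => //.
by exists k, 0; split => //; rewrite subn0.
Qed.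


Section Cat.
Variable C : {fset nat} -> Prop.
Hypothesis HC : bp_category C.

Lemma Cbp v : C v -> bracket_pattern v.
Proof. by case: HC => H _; apply: H. Qed.
Lemma Csup v v' : C v -> C v' -> C (superpos v v').
Proof. by case: HC => _ [H _]; apply: H. Qed.
Lemma Cdual v : C v -> C (dual v).
Proof. by case: HC => _ [_ [H _]]; apply: H. Qed.
Lemma Cproj v j : C v -> j \in v -> C (proj j v).
Proof. by case: HC => _ [_ [_ H]]; apply: H. Qed.

Lemma bn_proj j (w : {fset nat}) : j \in w -> bnorm (proj j w) = j.
Proof.
move=> Hj; apply: bn_eq; first by rewrite mem_proj Hj leqnn.
by move=> x; rewrite mem_proj => /andP[].
Qed.

Lemma gen v k : C v -> completion v k -> exists q, C q /\ bnorm q = k.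
Proof.
move=> Cv [j [i [Hj Hi Hij ->]]].
have C1 := Cproj Cv Hj; have B1 := bn_proj Hj.
have C2 := Cdual C1.
have H2 : (j - i)%N \in dual (proj j v).
  rewrite mem_dual B1; have -> : (j - (j - i) = i)%N by lia.
  rewrite mem_proj negb_and Hi /=; apply/andP; split; lia.
by exists (proj (j - i) (dual (proj j v))); split; [apply: Cproj | apply: bn_proj].
Qed.

Lemma inter v1 v2 : C v1 -> C v2 -> bnorm v1 = bnorm v2 ->
  exists v, [/\ C v, bnorm v = bnorm v1 & forall x, x \in v = (x \in v1) && (x \in v2)].
Proof.
move=> C1 C2 E.
have B1 := Cbp C1; have B2 := Cbp C2.
have D1 := dual_bp B1; have D2 := dual_bp B2.
have BD1 := bn_dual B1; have BD2 := bn_dual B2.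
have Bs := sup_bp D1 D2.
have BS : bnorm (superpos (dual v1) (dual v2)) = bnorm v1.
  apply: bn_eq; first by rewrite /superpos inE -BD1 bn_mem.
  move=> x; rewrite /superpos inE => /orP[] /bn_ge; lia.
exists (dual (superpos (dual v1) (dual v2))); split.
- by apply: Cdual; apply: Csup; apply: Cdual.
- by rewrite bn_dual.
move=> x; rewrite mem_dual BS /superpos inE !mem_dual -E negb_or !negb_and.
have m1 := bn_mem B1; have m2 := bn_mem B2; rewrite -E in m2.
case: (posnP x) => [->|x0]; first by case: B1 => _ /negbTE ->.
case: (leqP x (bnorm v1)) => xn; last first.
  apply/esym/negbTE; apply/negP => /andP[/bn_ge H _]; lia.
have -> : (bnorm v1 - (bnorm v1 - x) = x)%N by lia.
rewrite leq_subr /= !negbK.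
case: (ltnP x (bnorm v1)) => xn'.
  by have -> : (0 < bnorm v1 - x) = true by apply/idP; lia.
have ex : x = bnorm v1 by lia.
by subst x; rewrite subnn /= m1 m2.
Qed.

Definition S k := exists v, C v /\ completion v k.

Lemma step1 w : bracket_pattern w -> (forall k, completion w k -> S k) ->
  exists v, [/\ C v, v `<=` w & bnorm w \in v].
Proof.
move=> Bw Hw; set n := bnorm w.
have nw : n \in w := bn_mem Bw.
have n0 : 0 < n := bn_pos Bw.
have w0 : 0 \notin w by case: Bw.
have [u [Cu Bu]] : exists u, C u /\ bnorm u = n.
  have [p [Cp Hp]] : S n by apply: Hw; exists n, 0; split => //; rewrite subn0.
  exact: gen Cp Hp.
have holes : forall L : seq nat, (forall j, j \in L -> (0 < j < n) && (j \notin w)) ->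
    exists v, [/\ C v, bnorm v = n & forall j, j \in L -> j \notin v].
  elim => [|j L IH] HL; first by exists u; split.
  have [v [Cv Bv Hv]] : exists v, [/\ C v, bnorm v = n & forall j, j \in L -> j \notin v].
    by apply: IH => i Hi; apply: HL; rewrite inE Hi orbT.
  have /andP[/andP[j0 jn] jw] := HL j (mem_head _ _).
  have [p [Cp Hp]] : S (n - j)%N by apply: Hw; exists n, j; split.
  have [q [Cq Bq]] := gen Cp Hp.
  have Cr := Csup Cq Cu.
  have Br : bnorm (superpos q u) = n.
    apply: bn_eq; first by rewrite /superpos inE -Bu bn_mem ?orbT //; apply: Cbp.
    move=> x; rewrite /superpos inE => /orP[] /bn_ge; lia.
  have qr : (n - j)%N \in superpos q u by rewrite /superpos inE -Bq bn_mem //; apply: Cbp.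
  have Cs := Cdual Cr.
  have Bs : bnorm (dual (superpos q u)) = n by rewrite bn_dual ?Br //; apply: Cbp.
  have js : j \notin dual (superpos q u) by rewrite mem_dual Br qr andbF.
  have [v' [Cv' Bv' Hv']] := inter Cv Cs (etrans Bv (esym Bs)).
  exists v'; split => //; first by rewrite Bv'.
  move=> i; rewrite inE Hv' => /orP[/eqP ->|Hi]; first by rewrite (negbTE js) andbF.
  by rewrite (negbTE (Hv _ Hi)).
have HL : forall j, j \in [seq j <- iota 1 n | j \notin w] -> (0 < j < n) && (j \notin w).
  move=> j; rewrite mem_filter mem_iota => /andP[jw jr]; rewrite jw andbT.
  have : j != n by apply: contraNneq jw => ->.
  lia.
have [v [Cv Bv Hv]] := holes _ HL.
exists v; split => //; last by rewrite -Bv bn_mem //; apply: Cbp.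
apply/fsubsetP => x xv.
have xn : x <= n by rewrite -Bv bn_ge.
have x0 : x != 0 by apply/eqP => E; case: (Cbp Cv) => _; rewrite -E xv.
apply: contraT => xw; have := Hv x; rewrite mem_filter xw mem_iota /= xv.
have -> : 1 <= x < 1 + n by lia.
by move=> /(_ isT).
Qed.

Lemma mainC w : bracket_pattern w -> (forall k, completion w k -> S k) -> C w.
Proof.
move=> Bw Hw.
have vj : forall j, j \in w -> exists v, [/\ C v, v `<=` w & j \in v].
  move=> j jw.
  have [v [Cv Hv Jv]] := step1 (proj_bp Bw jw) (fun k Hk => Hw k (proj_compl jw Hk)).
  exists v; split => //; last by rewrite bn_proj in Jv.
  apply: fsubset_trans Hv _; apply/fsubsetP => x; rewrite mem_proj => /andP[].
  by [].
have L : forall L : seq nat, {subset L <= w} -> exists v, [/\ C v, v `<=` w & {subset L <= v}].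
  elim => [|j L IH] HL.
    by have [v [Cv Hv _]] := vj _ (bn_mem Bw); exists v; split.
  have [v [Cv Hv Lv]] : exists v, [/\ C v, v `<=` w & {subset L <= v}].
    by apply: IH => x Hx; apply: HL; rewrite inE Hx orbT.
  have [v' [Cv' Hv' Jv']] := vj j (HL _ (mem_head _ _)).
  exists (superpos v v'); split; first exact: Csup.
    by rewrite /superpos fsubUset Hv Hv'.
  move=> x; rewrite inE /superpos inE => /orP[/eqP ->|Hx]; first by rewrite Jv' orbT.
  by rewrite Lv.
have [v [Cv Hv Lv]] := L (w : seq nat) (fun x Hx => Hx).
suff -> : w = v by [].
apply/eqP; rewrite eqEfsubset Hv andbT; apply/fsubsetP => x Hx; exact: Lv.
Qed.
End Cat.


Lemma split_compl v a b : 0 < a -> 0 < b -> completion v (a + b)%N ->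
  completion v a \/ completion v b.
Proof.
move=> a0 b0 [j [i [Hj Hi Hij E]]].
case: (boolP ((i + a)%N \in v)) => H.
  by left; exists (i + a)%N, i; split => //; lia.
by right; exists j, (i + a)%N; split => //; lia.
Qed.

Theorem proposition7p17 :
  (forall M : nat -> Prop, submonoid M -> bp_category (W M)) /\
  (forall M M' : nat -> Prop, submonoid M -> submonoid M' -> W M = W M' -> M = M') /\
  (forall C : {fset nat} -> Prop, bp_category C ->
     exists M : nat -> Prop, submonoid M /\ W M = C).
Proof.
split; first exact: part1.
split.
  move=> M M' HM HM' E; apply: functional_extensionality => k.
  apply: propositional_extensionality; split.
    exact: inj_half.
  exact: (inj_half HM (esym E)).
move=> C HC; exists (fun k => ~ S C k); split.
  split.
    by move=> [v [_ [j [i [_ _ Hij E]]]]]; lia.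
  move=> a b Ha Hb [v [Cv Hv]].
  case: (posnP a) => [a0|a0]; first by subst a; apply: Hb; exists v.
  case: (posnP b) => [b0|b0]; first by subst b; rewrite addn0 in Hv; apply: Ha; exists v.
  case: (split_compl a0 b0 Hv) => H; [apply: Ha | apply: Hb]; by exists v.
apply: functional_extensionality => w; apply: propositional_extensionality; split.
  move=> [Bw Hw]; apply: (mainC HC Bw) => k Hk; exact: NNPP (Hw k Hk).
move=> Cw; split; first exact: (Cbp HC Cw).
by move=> k Hk; apply; exists w.
Qed.
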